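(* Let $A$ be an affine Poisson $\Bbbk$-algebra and $\mathcal{U}(A)$ its Poisson enveloping algebra. (i) If $A$ is $\mathbb{Z}$-graded and $\{-,-\}$ is homogeneous of degree $d$ (i.e. $\{A(i),A(j)\}\subseteq A(i+j+d)$), then $\mathcal{U}(A)$ is $\mathbb{Z}$-graded with $\deg m_x=\deg x$ and $\deg h_x=\deg x+d$ for all homogeneous $x\in A$. (ii) If in (i) $A$ is connected $\mathbb{N}$-graded and $d\ge0$, then $\mathcal{U}(A)$ is connected $\mathbb{N}$-graded. (iii) If $A$ is a connected $\mathbb{N}$-graded algebra generated in degree $1$ and $\{-,-\}$ is homogeneous of degree $d\ge0$, then $\mathcal{U}(A)$ is a connected $\mathbb{N}$-graded algebra minimally generated by $m_{A(1)}$ and $h_{A(1)}$.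
   Context: A Poisson algebra is a commutative algebra with a Lie bracket satisfying $\{ab,c\}=a\{b,c\}+\{a,c\}b$. The Poisson enveloping algebra $\mathcal{U}(A)$ is the unital associative $\Bbbk$-algebra generated by two copies $m_A=\{m_a\}$, $h_A=\{h_a\}$ of $A$ (with $a\mapsto m_a$, $a\mapsto h_a$ linear) subject to $m_{xy}=m_xm_y$, $h_{\{x,y\}}=h_xh_y-h_yh_x$, $h_{xy}=m_yh_x+m_xh_y$, $m_{\{x,y\}}=h_xm_y-m_yh_x$, $m_1=1$. A graded algebra $B=\bigoplus_{i\ge0}B(i)$ is connected if $B(0)=\Bbbk$. ''Minimally generated'' means the images of these elements form a basis of $\mathfrak{m}/\mathfrak{m}^2$, $\mathfrak{m}$ the maximal graded ideal. *)

(* Defs.v *)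
From HB Require Import structures.
From mathcomp Require Import all_boot all_order all_algebra.
Set Implicit Arguments. Unset Strict Implicit. Unset Printing Implicit Defensive.
Import Order.TTheory GRing.Theory Num.Theory.
Local Open Scope ring_scope.

Section Defs.
Variable k : fieldType.

Definition is_Poisson_bracket (A : comAlgType k) (br : A -> A -> A) : Prop :=
  [/\ (forall (a : k) x y z, br (a *: x + y) z = a *: br x z + br y z),
      (forall (a : k) x y z, br z (a *: x + y) = a *: br z x + br z y),
      (forall x, br x x = 0),
      (forall x y z, br x (br y z) + br y (br z x) + br z (br x y) = 0) &
      (forall x y z, br (x * y) z = x * br y z + br x z * y)].

Definition is_subalgebra (A : comAlgType k) (Q : A -> Prop) : Prop :=
  [/\ Q 0, Q 1, (forall (a : k) x y, Q x -> Q y -> Q (a *: x + y)) &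
      (forall x y, Q x -> Q y -> Q (x * y))].

Definition in_gen_subalg (A : comAlgType k) (P : A -> Prop) (a : A) : Prop :=
  forall Q : A -> Prop, is_subalgebra Q -> (forall x, P x -> Q x) -> Q a.

Definition affine (A : comAlgType k) : Prop :=
  exists s : seq A, forall a, in_gen_subalg (fun x => x \in s) a.

Definition klinear (V W : lmodType k) (f : V -> W) : Prop :=
  forall (a : k) x y, f (a *: x + y) = a *: f x + f y.

Definition PEA_relations (A : comAlgType k) (br : A -> A -> A)
    (B : algType k) (m h : A -> B) : Prop :=
  [/\ klinear m, klinear h, (forall x y, m (x * y) = m x * m y) &
      (forall x y, h (br x y) = h x * h y - h y * h x)] /\
  [/\ (forall x y, h (x * y) = m y * h x + m x * h y),
      (forall x y, m (br x y) = h x * m y - m y * h x) &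
      m 1 = 1].

Definition alg_morph (B C : algType k) (phi : B -> C) : Prop :=
  [/\ klinear phi, (forall x y, phi (x * y) = phi x * phi y) & phi 1 = 1].

(* (U, m, h) is the Poisson enveloping algebra of (A, br): the unital
   associative k-algebra generated by m_A, h_A subject to the relations,
   i.e. the initial object among algebras with maps satisfying them. *)
Definition is_Poisson_enveloping (A : comAlgType k) (br : A -> A -> A)
    (U : algType k) (m h : A -> U) : Prop :=
  PEA_relations br m h /\
  forall (B : algType k) (m' h' : A -> B), PEA_relations br m' h' ->
    exists phi : U -> B,
      [/\ alg_morph phi, (forall x, phi (m x) = m' x),
          (forall x, phi (h x) = h' x) &
          (forall psi : U -> B, alg_morph psi -> (forall x, psi (m x) = m' x) ->
             (forall x, psi (h x) = h' x) -> forall u, psi u = phi u)].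

Definition is_subspace (V : lmodType k) (P : V -> Prop) : Prop :=
  P 0 /\ forall (a : k) x y, P x -> P y -> P (a *: x + y).

Definition Zgraded (B : algType k) (G : int -> B -> Prop) : Prop :=
  [/\ (forall i, is_subspace (G i)),
      (forall u, exists (s : seq int) (f : int -> B),
          (forall i, G i (f i)) /\ u = \sum_(i <- s) f i),
      (forall (s : seq int) (f : int -> B), uniq s -> (forall i, G i (f i)) ->
          \sum_(i <- s) f i = 0 -> forall i, i \in s -> f i = 0),
      (forall i j x y, G i x -> G j y -> G (i + j) (x * y)) &
      G 0 1].

Definition connected_Ngraded (B : algType k) (G : int -> B -> Prop) : Prop :=
  [/\ Zgraded G,
      (forall i x, i < 0 -> G i x -> x = 0) &
      (forall x, G 0 x <-> exists c : k, x = c *: 1)].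

Definition bracket_homog (A : comAlgType k) (br : A -> A -> A)
    (G : int -> A -> Prop) (d : int) : Prop :=
  forall i j x y, G i x -> G j y -> G (i + j + d) (br x y).

Definition PEA_degrees (A : comAlgType k) (U : algType k) (m h : A -> U)
    (GA : int -> A -> Prop) (GU : int -> U -> Prop) (d : int) : Prop :=
  forall i x, GA i x -> GU i (m x) /\ GU (i + d) (h x).

Definition in_max_ideal (B : algType k) (G : int -> B -> Prop) (u : B) : Prop :=
  exists (s : seq int) (f : int -> B),
    [/\ (forall i, i \in s -> 0 < i), (forall i, G i (f i)) & u = \sum_(i <- s) f i].

Definition in_max_ideal_sq (B : algType k) (G : int -> B -> Prop) (u : B) : Prop :=
  exists s : seq (B * B),
    (forall p, p \in s -> in_max_ideal G p.1 /\ in_max_ideal G p.2) /\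
    u = \sum_(p <- s) p.1 * p.2.

(* the images of m_{A(1)} and h_{A(1)} form a basis of m/m^2, i.e. the
   map A(1) (+) A(1) -> m/m^2, (x,y) |-> [m_x + h_y] is a linear bijection *)
Definition minimally_generated_by_m1_h1 (A : comAlgType k) (U : algType k)
    (m h : A -> U) (GA : int -> A -> Prop) (GU : int -> U -> Prop) : Prop :=
  (forall x, GA 1 x -> in_max_ideal GU (m x) /\ in_max_ideal GU (h x)) /\
  (forall u, in_max_ideal GU u ->
     exists x y, [/\ GA 1 x, GA 1 y & in_max_ideal_sq GU (u - (m x + h y))]) /\
  (forall x y, GA 1 x -> GA 1 y -> in_max_ideal_sq GU (m x + h y) ->
     x = 0 /\ y = 0).

End Defs.

(* Main.v *)
Require Import Defs.
From HB Require Import structures.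
From mathcomp Require Import all_boot all_order all_algebra.
From mathcomp Require Import ring zify.
From mathcomp Require boolp.
From Stdlib Require Import ClassicalEpsilon ProofIrrelevance FunctionalExtensionality.
Import Order.TTheory GRing.Theory Num.Theory.
Local Open Scope ring_scope.
Set Implicit Arguments. Unset Strict Implicit. Unset Printing Implicit Defensive.


Definition asb (P : Prop) : bool :=
  if excluded_middle_informative P then true else false.
Lemma asbP (P : Prop) : reflect P (asb P).
Proof. rewrite /asb; case: excluded_middle_informative => H; by constructor. Qed.

Section Gen.
Variables (k : fieldType) (A : comAlgType k) (br : A -> A -> A) (U : algType k)
  (m h : A -> U).
Hypothesis Henv : is_Poisson_enveloping br m h.
Variable S : U -> Prop.
Hypotheses (S1 : S 1) (S0 : S 0) (SD : forall x y, S x -> S y -> S (x + y))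
  (SZ : forall (a : k) x, S x -> S (a *: x)) (SM : forall x y, S x -> S y -> S (x * y))
  (Sm : forall x, S (m x)) (Sh : forall x, S (h x)).

Definition Sb : pred U := fun u => asb (S u).
Lemma Sb_closed : GRing.subsemialg_closed Sb.
Proof.
split; rewrite /Sb.
- by apply/asbP.
- split; first by apply/asbP.
  by move=> u v /asbP Hu /asbP Hv; apply/asbP; auto.
- by move=> a u /asbP Hu; apply/asbP; auto.
- by move=> u v /asbP Hu /asbP Hv; apply/asbP; auto.
Qed.
HB.instance Definition _ := GRing.isSubalgClosed.Build k U Sb Sb_closed.
Record W := MkW { wval : U; wP : Sb wval }.
HB.instance Definition _ := [isSub for wval].
HB.instance Definition _ := [Choice of W by <:].
HB.instance Definition _ := [SubChoice_isSubAlgebra of W by <:].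

Definition Wm x : W := @MkW (m x) (introT (asbP _) (Sm x)).
Definition Wh x : W := @MkW (h x) (introT (asbP _) (Sh x)).

Lemma gen_all u : S u.
Proof.
have [[[lm lh mM hB] [hM mB m1]] Huniv] := Henv.
have Hrel : PEA_relations br Wm Wh.
  split; split.
  - by move=> a x y; apply: val_inj => /=; rewrite lm.
  - by move=> a x y; apply: val_inj => /=; rewrite lh.
  - by move=> x y; apply: val_inj => /=; rewrite mM.
  - by move=> x y; apply: val_inj => /=; rewrite hB.
  - by move=> x y; apply: val_inj => /=; rewrite hM.
  - by move=> x y; apply: val_inj => /=; rewrite mB.
  - by apply: val_inj => /=; rewrite m1.
have [phi [[lphi mphi phi1] phim phih _]] := Huniv W Wm Wh Hrel.
have Hrel2 : PEA_relations br m h by split; split.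
have [psi [_ _ _ uniq]] := Huniv U m h Hrel2.
have Hv : forall u, val (phi u) = psi u.
  apply: uniq.
  - split.
    + by move=> a x y; rewrite lphi.
    + by move=> x y; rewrite mphi.
    + by rewrite phi1.
  - by move=> x; rewrite phim.
  - by move=> x; rewrite phih.
have Hid : forall u, u = psi u.
  by move=> u0; apply: (uniq id) => //; split.

rewrite (Hid u) -Hv; apply/asbP; exact: (wP (phi u)).
Qed.
End Gen.


Section Endo.
Variables (k : fieldType) (V : algType k).

Definition linP (f : (int -> V) -> (int -> V)) :=
  forall (a : k) phi psi, f (fun n => a *: phi n + psi n) = (fun n => a *: f phi n + f psi n).

Record Endo := MkEndo { ef :> (int -> V) -> (int -> V); efP : linP ef }.

Lemma endo_ext (X Y : Endo) : (forall phi n, X phi n = Y phi n) -> X = Y.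
Proof.
case: X Y => f fP [g gP] /= H.
have E : f = g by apply: functional_extensionality => phi; apply: functional_extensionality.
subst g; congr MkEndo; apply: proof_irrelevance.
Qed.

HB.instance Definition _ := boolp.gen_eqMixin Endo.
HB.instance Definition _ := boolp.gen_choiceMixin Endo.

Lemma ef0 (X : Endo) : X (fun _ => 0) = fun _ => 0.
Proof.
apply: functional_extensionality => n.
have := congr1 (fun f => f n) (efP X 1 (fun _ => 0) (fun _ => 0)).
have -> : (fun n : int => 1 *: (0 : V) + 0) = fun _ => 0.
  by apply: functional_extensionality => j; rewrite scale1r addr0.
rewrite scale1r /= => H.
by apply: (@addrI _ (X (fun _ => 0) n)); rewrite addr0 -H.
Qed.

Lemma efD (X : Endo) phi psi : X (fun n => phi n + psi n) = fun n => X phi n + X psi n.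
Proof.
have := efP X 1 phi psi.
have -> : (fun n : int => 1 *: phi n + psi n) = fun n => phi n + psi n.
  by apply: functional_extensionality => n; rewrite scale1r.
move=> ->; apply: functional_extensionality => n; by rewrite scale1r.
Qed.

Lemma efZ (X : Endo) (a : k) phi : X (fun n => a *: phi n) = fun n => a *: X phi n.
Proof.
have := efP X a phi (fun _ => 0).
have -> : (fun n : int => a *: phi n + 0) = fun n => a *: phi n.
  by apply: functional_extensionality => n; rewrite addr0.
move=> ->; rewrite ef0; apply: functional_extensionality => n; by rewrite addr0.
Qed.

Lemma efN (X : Endo) phi : X (fun n => - phi n) = fun n => - X phi n.
Proof.
have -> : (fun n => - phi n) = fun n => (-1 : k) *: phi n.
  by apply: functional_extensionality => n; rewrite scaleN1r.
rewrite efZ; apply: functional_extensionality => n; by rewrite scaleN1r.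
Qed.

Definition e0f : (int -> V) -> (int -> V) := fun _ _ => 0.
Lemma e0P : linP e0f.
Proof. by move=> a phi psi; apply: functional_extensionality => n; rewrite /e0f scaler0 addr0. Qed.
Definition e0 := MkEndo e0P.

Definition eaddf (X Y : Endo) : (int -> V) -> (int -> V) := fun phi n => X phi n + Y phi n.
Lemma eaddP X Y : linP (eaddf X Y).
Proof.
move=> a phi psi; apply: functional_extensionality => n; rewrite /eaddf !efP.
by rewrite scalerDr addrACA.
Qed.
Definition eadd X Y := MkEndo (eaddP X Y).

Definition eoppf (X : Endo) : (int -> V) -> (int -> V) := fun phi n => - X phi n.
Lemma eoppP X : linP (eoppf X).
Proof.
move=> a phi psi; apply: functional_extensionality => n; rewrite /eoppf !efP.
by rewrite opprD scalerN.
Qed.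
Definition eopp X := MkEndo (eoppP X).

Lemma eaddA : associative eadd.
Proof. by move=> X Y Z; apply: endo_ext => phi n /=; rewrite /eaddf addrA. Qed.
Lemma eaddC : commutative eadd.
Proof. by move=> X Y; apply: endo_ext => phi n /=; rewrite /eaddf addrC. Qed.
Lemma eadd0 : left_id e0 eadd.
Proof. by move=> X; apply: endo_ext => phi n /=; rewrite /eaddf /e0f add0r. Qed.
Lemma eaddN : left_inverse e0 eopp eadd.
Proof. by move=> X; apply: endo_ext => phi n /=; rewrite /eaddf /eoppf /e0f addNr. Qed.

HB.instance Definition _ := GRing.isZmodule.Build Endo eaddA eaddC eadd0 eaddN.

Definition e1f : (int -> V) -> (int -> V) := fun phi => phi.
Lemma e1P : linP e1f. Proof. by []. Qed.
Definition e1 := MkEndo e1P.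

Definition emulf (X Y : Endo) : (int -> V) -> (int -> V) := fun phi => X (Y phi).
Lemma emulP X Y : linP (emulf X Y).
Proof. by move=> a phi psi; rewrite /emulf !efP. Qed.
Definition emul X Y := MkEndo (emulP X Y).

Lemma emulA : associative emul.
Proof. by move=> X Y Z; apply: endo_ext. Qed.
Lemma emul1 : left_id e1 emul.
Proof. by move=> X; apply: endo_ext. Qed.
Lemma emul1r : right_id e1 emul.
Proof. by move=> X; apply: endo_ext. Qed.
Lemma emulDl : left_distributive emul eadd.
Proof. by move=> X Y Z; apply: endo_ext. Qed.
Lemma emulDr : right_distributive emul eadd.
Proof. by move=> X Y Z; apply: endo_ext => phi n /=; rewrite /emulf /eaddf efD. Qed.
Lemma e1_neq0 : e1 != 0.
Proof.
apply/eqP => /(congr1 (fun X : Endo => X (fun _ => 1) 0)) /=.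
rewrite /e1f /= /e0f; apply/eqP; exact: oner_neq0.
Qed.

HB.instance Definition _ := GRing.Zmodule_isNzRing.Build Endo emulA emul1 emul1r
  emulDl emulDr e1_neq0.

Definition escalef (a : k) (X : Endo) : (int -> V) -> (int -> V) := fun phi n => a *: X phi n.
Lemma escaleP a X : linP (escalef a X).
Proof.
move=> b phi psi; apply: functional_extensionality => n; rewrite /escalef !efP.
by rewrite scalerDr !scalerA mulrC.
Qed.
Definition escale a X := MkEndo (escaleP a X).

Lemma escaleA a b X : escale a (escale b X) = escale (a * b) X.
Proof. by apply: endo_ext => phi n /=; rewrite /escalef scalerA. Qed.
Lemma escale1 : left_id 1 escale.
Proof. by move=> X; apply: endo_ext => phi n /=; rewrite /escalef scale1r. Qed.
Lemma escaleDr : right_distributive escale +%R.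
Proof. by move=> a X Y; apply: endo_ext => phi n /=; rewrite /escalef /eaddf scalerDr. Qed.
Lemma escaleDl X : {morph escale^~ X : a b / a + b}.
Proof. by move=> a b; apply: endo_ext => phi n /=; rewrite /escalef /eaddf scalerDl. Qed.

HB.instance Definition _ := GRing.Zmodule_isLmodule.Build k Endo escaleA escale1
  escaleDr escaleDl.

Lemma escaleAl (a : k) (X Y : Endo) : a *: (X * Y) = (a *: X) * Y.
Proof. by apply: endo_ext. Qed.
HB.instance Definition _ := GRing.Lmodule_isLalgebra.Build k Endo escaleAl.
Lemma escaleAr (a : k) (X Y : Endo) : a *: (X * Y) = X * (a *: Y).
Proof. by apply: endo_ext => phi n /=; rewrite /emulf /escalef efZ. Qed.
HB.instance Definition _ := GRing.Lalgebra_isAlgebra.Build k Endo escaleAr.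

Lemma endo_addE (X Y : Endo) phi n : (X + Y) phi n = X phi n + Y phi n. Proof. by []. Qed.
Lemma endo_mulE (X Y : Endo) phi : (X * Y) phi = X (Y phi). Proof. by []. Qed.
Lemma endo_scaleE a (X : Endo) phi n : (a *: X) phi n = a *: X phi n. Proof. by []. Qed.
Lemma endo_oneE phi : (1 : Endo) phi = phi. Proof. by []. Qed.
Lemma endo_zeroE phi n : (0 : Endo) phi n = 0. Proof. by []. Qed.
Lemma endo_oppE (X : Endo) phi n : (- X) phi n = - X phi n. Proof. by []. Qed.
Lemma endo_sumE I (s : seq I) (F : I -> Endo) phi n :
  (\sum_(i <- s) F i) phi n = \sum_(i <- s) F i phi n.
Proof.
elim: s => [|a s IH]; first by rewrite !big_nil.
by rewrite !big_cons endo_addE IH.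
Qed.
End Endo.



Lemma sum_pred1 (C : zmodType) (u : seq int) j (F : int -> C) :
  uniq u -> j \in u -> \sum_(i <- u | i == j) F i = F j.
Proof.
move=> uu ju; rewrite big_mkcond (bigD1_seq j) //= eqxx big1 ?addr0 //.
by move=> i /negbTE ->.
Qed.

Lemma sum_group (T : eqType) (C : zmodType) (l : seq (int * T)) (u : seq int)
    (F : int * T -> C) :
  uniq u -> (forall p, p \in l -> p.1 \in u) ->
  \sum_(p <- l) F p = \sum_(i <- u) \sum_(p <- l | p.1 == i) F p.
Proof.
move=> uu Hl.
rewrite (exchange_big_dep xpredT) //=.
rewrite big_seq [RHS]big_seq; apply: eq_bigr => p pl.
rewrite (eq_bigl (fun i => i == p.1)); last by move=> i; rewrite eq_sym.
by rewrite sum_pred1 //; apply: Hl.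
Qed.

Section Sub.
Variables (k : fieldType) (B : algType k) (G : int -> B -> Prop).
Hypothesis HGs : forall i, is_subspace (G i).

Definition Dec (l : seq (int * B)) (x : B) :=
  (forall p, p \in l -> G p.1 p.2) /\ x = \sum_(p <- l) p.2.

Lemma G0 i : G i 0. Proof. by case: (HGs i). Qed.
Lemma GZD i a x y : G i x -> G i y -> G i (a *: x + y).
Proof. by case: (HGs i) => _ H; apply: H. Qed.
Lemma GD i x y : G i x -> G i y -> G i (x + y).
Proof. by move=> gx gy; have := GZD 1 gx gy; rewrite scale1r. Qed.
Lemma GZ i a x : G i x -> G i (a *: x).
Proof. by move=> gx; have := GZD a gx (G0 i); rewrite addr0. Qed.
Lemma GN i x : G i x -> G i (- x).
Proof. by move=> gx; have := GZ (-1) gx; rewrite scaleN1r. Qed.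
Lemma GB i x y : G i x -> G i y -> G i (x - y).
Proof. by move=> gx gy; apply: GD => //; apply: GN. Qed.
Lemma Gsum (I : eqType) (s : seq I) i (F : I -> B) : (forall j, j \in s -> G i (F j)) ->
  G i (\sum_(j <- s) F j).
Proof.
elim: s => [|a s IH] H; first by rewrite big_nil; apply: G0.
rewrite big_cons; apply: GD; first by apply: H; rewrite inE eqxx.
by apply: IH => j js; apply: H; rewrite inE js orbT.
Qed.
End Sub.

Section Dec.
Variables (k : fieldType) (B : algType k) (G : int -> B -> Prop).
Hypothesis HG : Zgraded G.
Lemma HGs : forall i, is_subspace (G i). Proof. by case: HG. Qed.
Local Notation Dec := (Dec G).

Lemma GM i j x y : G i x -> G j y -> G (i + j) (x * y).
Proof. by case: HG => _ _ _ H _; apply: H. Qed.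
Lemma G1 : G 0 1. Proof. by case: HG. Qed.

Lemma dec_exists x : exists l, Dec l x.
Proof.
case: HG => _ /(_ x) [s [f [Hf ->]]] _ _ _.
exists [seq (i, f i) | i <- s]; split; last by rewrite big_map.
by move=> p /mapP [i _ ->].
Qed.

Lemma dec_zero l : Dec l 0 -> forall n, \sum_(p <- l | p.1 == n) p.2 = 0.
Proof.
move=> [Hl H0] n.
set u := undup [seq p.1 | p <- l].
have uu : uniq u by apply: undup_uniq.
have Hu : forall p, p \in l -> p.1 \in u.
  by move=> p pl; rewrite mem_undup; apply: map_f.
have HF : forall i, G i (\sum_(p <- l | p.1 == i) p.2).
  move=> i; rewrite -big_filter; apply: Gsum; first exact: HGs; move=> p.
  by rewrite mem_filter => /andP [/eqP <- pl]; apply: Hl.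
have Hs : \sum_(i <- u) \sum_(p <- l | p.1 == i) p.2 = 0.
  by rewrite -sum_group.
case: HG => _ _ /(_ u _ uu HF Hs) Hind _ _.
case nu: (n \in u); first exact: Hind.
rewrite big_seq_cond big1 // => p /andP [pl /eqP pn].
by move: (Hu p pl); rewrite pn nu.
Qed.

Lemma dec_indep (C : zmodType) (Psi : int -> B -> C)
  (HPsi : forall i a b, Psi i (a - b) = Psi i a - Psi i b) l l' x :
  Dec l x -> Dec l' x -> \sum_(p <- l) Psi p.1 p.2 = \sum_(p <- l') Psi p.1 p.2.
Proof.
move=> [Hl Hx] [Hl' Hx'].
have P0 i : Psi i 0 = 0 by have := HPsi i 0 0; rewrite !subrr.
have PN i a : Psi i (- a) = - Psi i a by have := HPsi i 0 a; rewrite !sub0r P0 sub0r.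
have PD i a b : Psi i (a + b) = Psi i a + Psi i b.
  by have := HPsi i a (- b); rewrite opprK PN opprK.
have PS i I (s : seq I) (F : I -> B) : Psi i (\sum_(j <- s) F j) = \sum_(j <- s) Psi i (F j).
  elim: s => [|a s IH]; first by rewrite !big_nil P0.
  by rewrite !big_cons PD IH.
set l2 := l ++ [seq (p.1, - p.2) | p <- l'].
have D2 : Dec l2 0.
  split.
    move=> p; rewrite mem_cat => /orP [/Hl //|/mapP [q ql' ->] /=].
    by apply: GN; [exact: HGs | apply: Hl'].
  by rewrite big_cat big_map /= sumrN -Hx -Hx' subrr.
have Z := dec_zero D2.
set u := undup [seq p.1 | p <- l2].
have uu : uniq u by apply: undup_uniq.
have Hu : forall p, p \in l2 -> p.1 \in u.
  by move=> p pl; rewrite mem_undup; apply: map_f.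
have : \sum_(p <- l2) Psi p.1 p.2 = 0.
  rewrite (sum_group _ uu Hu) big1 // => i _.
  rewrite (eq_bigr (fun p => Psi i p.2)); last by move=> p /eqP ->.
  by rewrite -big_filter -(PS i) big_filter Z P0.
rewrite big_cat big_map /=.
rewrite (eq_bigr (fun p => - Psi p.1 p.2) (fun p _ => PN p.1 p.2)) sumrN.
by move=> /eqP; rewrite subr_eq0 => /eqP.
Qed.
End Dec.


Definition addF (X Y : zmodType) (f : X -> Y) := forall a b, f (a - b) = f a - f b.

Section AddF.
Variables (X Y Z : zmodType).
Lemma addF0 (f : X -> Y) : addF f -> f 0 = 0.
Proof. by move=> H; have := H 0 0; rewrite !subrr. Qed.
Lemma addFN (f : X -> Y) : addF f -> forall a, f (- a) = - f a.
Proof. by move=> H a; have := H 0 a; rewrite sub0r (addF0 H) sub0r. Qed.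
Lemma addFD (f : X -> Y) : addF f -> forall a b, f (a + b) = f a + f b.
Proof. by move=> H a b; have := H a (- b); rewrite opprK addFN // opprK. Qed.
Lemma addF_sum (f : X -> Y) : addF f -> forall I (s : seq I) (F : I -> X),
  f (\sum_(i <- s) F i) = \sum_(i <- s) f (F i).
Proof.
move=> H I s F; elim: s => [|a s IH]; first by rewrite !big_nil addF0.
by rewrite !big_cons addFD // IH.
Qed.
Lemma addF_comp (f : Y -> Z) (g : X -> Y) : addF f -> addF g -> addF (fun x => f (g x)).
Proof. by move=> Hf Hg a b /=; rewrite Hg Hf. Qed.
Lemma addF_add (f g : X -> Y) : addF f -> addF g -> addF (fun x => f x + g x).
Proof. by move=> Hf Hg a b /=; rewrite Hf Hg opprD addrACA. Qed.
Lemma addF_sub (f g : X -> Y) : addF f -> addF g -> addF (fun x => f x - g x).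
Proof. by move=> Hf Hg a b /=; rewrite Hf Hg !opprB addrACA [RHS]addrACA addrC [RHS]addrC [- g a + _]addrC. Qed.
End AddF.

Lemma addF_mull (R : ringType) (c : R) : addF (fun x : R => c * x).
Proof. by move=> a b; rewrite mulrBr. Qed.
Lemma addF_mulr (R : ringType) (c : R) : addF (fun x : R => x * c).
Proof. by move=> a b; rewrite mulrBl. Qed.

Section KLin.
Variables (k : fieldType) (V W : lmodType k).
Lemma klinear_addF (f : V -> W) : klinear f -> addF f.
Proof.
move=> H.
have f0 : f 0 = 0.
  by have := H 1 0 0; rewrite !scale1r addr0 => E; apply: (@addrI _ (f 0)); rewrite addr0 -E.
move=> a b; have := H (-1) b a; rewrite !scaleN1r => E.
by rewrite addrC E addrC.
Qed.
Lemma klinearZ (f : V -> W) : klinear f -> forall a x, f (a *: x) = a *: f x.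
Proof.
move=> H a x; have := H a x 0; rewrite addr0 => ->.
by rewrite addF0 ?addr0 //; apply: klinear_addF.
Qed.
End KLin.

Definition choose_dec (k : fieldType) (B : algType k) (G : int -> B -> Prop)
  (HG : Zgraded G) (x : B) : seq (int * B) :=
  proj1_sig (constructive_indefinite_description _ (dec_exists HG x)).

Lemma choose_decP (k : fieldType) (B : algType k) (G : int -> B -> Prop)
  (HG : Zgraded G) (x : B) : Dec G (choose_dec HG x) x.
Proof. exact: (proj2_sig (constructive_indefinite_description _ (dec_exists HG x))). Qed.

Section Lift.
Variables (k : fieldType) (B : algType k) (G : int -> B -> Prop).
Hypothesis HG : Zgraded G.
Variables (C : zmodType) (Psi : int -> B -> C).
Hypothesis HPsi : forall i, addF (Psi i).

Definition Lift (x : B) : C := \sum_(p <- choose_dec HG x) Psi p.1 p.2.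

Lemma LiftE l x : Dec G l x -> Lift x = \sum_(p <- l) Psi p.1 p.2.
Proof. by move=> D; exact: (dec_indep HG HPsi (choose_decP HG x) D). Qed.

Lemma Lift_hom i x : G i x -> Lift x = Psi i x.
Proof.
move=> Gx; rewrite (@LiftE [:: (i, x)]) ?big_seq1 //.
split; last by rewrite big_seq1.
by move=> p; rewrite inE => /eqP ->.
Qed.

Lemma Lift_addF : addF Lift.
Proof.
move=> a b.
have [Da Ha] := choose_decP HG a; have [Db Hb] := choose_decP HG b.
set la := choose_dec HG a; set lb := choose_dec HG b.
rewrite (@LiftE (la ++ [seq (p.1, - p.2) | p <- lb])).
  rewrite big_cat big_map /=.
  rewrite [X in _ + X = _](eq_bigr (fun p => - Psi p.1 p.2)); last by move=> p _ /=; rewrite (addFN (HPsi _)).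
  by rewrite sumrN.
split.
  move=> p; rewrite mem_cat => /orP [/Da //|/mapP [q ql' ->] /=].
  by apply: GN; [exact: HGs | apply: Db].
by rewrite big_cat big_map /= sumrN -Ha -Hb.
Qed.
End Lift.

Section Lift2.
Variables (k : fieldType) (B : algType k) (G : int -> B -> Prop).
Hypothesis HG : Zgraded G.

Lemma bilin_ext (C : zmodType) (F1 F2 : B -> B -> C) :
  (forall x, addF (F1 x)) -> (forall y, addF (F1^~ y)) ->
  (forall x, addF (F2 x)) -> (forall y, addF (F2^~ y)) ->
  (forall i j x y, G i x -> G j y -> F1 x y = F2 x y) ->
  forall x y, F1 x y = F2 x y.
Proof.
move=> H1 H1' H2 H2' H x y.
have [Dx ->] := choose_decP HG x; have [Dy ->] := choose_decP HG y.
rewrite (addF_sum (H1' _)) (addF_sum (H2' _)); apply: eq_big_seq => p pl.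
rewrite (addF_sum (H1 _)) (addF_sum (H2 _)); apply: eq_big_seq => q ql.
by apply: H; [apply: Dx | apply: Dy].
Qed.
End Lift2.


Section MaxI.
Variables (k : fieldType) (B : algType k) (G : int -> B -> Prop).
Hypothesis HG : Zgraded G.
Let HGs := HGs HG.

Lemma dec_hom l u i n : Dec G l u -> G i u ->
  \sum_(p <- l | p.1 == n) p.2 = if n == i then u else 0.
Proof.
move=> D gu.
have HPsi : forall j, addF (fun v : B => if j == n then v else 0).
  by move=> j a b; case: (j == n); rewrite ?subrr.
have D1 : Dec G [:: (i, u)] u.
  split; last by rewrite big_seq1.
  by move=> p; rewrite inE => /eqP ->.
have := dec_indep HG HPsi D D1.
rewrite big_seq1 /= -big_mkcond => ->.
by rewrite eq_sym.
Qed.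

Definition mIl u := exists l, Dec G l u /\ (forall p, p \in l -> 0 < p.1).

Lemma mI_iff u : in_max_ideal G u <-> mIl u.
Proof.
split.
  move=> [s [f [Hs Hf ->]]].
  exists [seq (i, f i) | i <- s]; split; last by move=> p /mapP [i iin ->]; apply: Hs.
  by split; [move=> p /mapP [i _ ->] | rewrite big_map].
move=> [l [[Dl El] Pl]].
exists (undup [seq p.1 | p <- l]), (fun i => if 0 < i then \sum_(p <- l | p.1 == i) p.2 else 0).
split.
- by move=> i; rewrite mem_undup => /mapP [p pl ->]; apply: Pl.
- move=> i; case: ifP => _; last exact: G0.
  rewrite -big_filter; apply: Gsum => // p.
  by rewrite mem_filter => /andP [/eqP <- pl]; apply: Dl.
- rewrite El (@sum_group _ _ l (undup [seq p.1 | p <- l]) (fun p => p.2) (undup_uniq _)); last first.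
    by move=> p pl; rewrite mem_undup; apply: map_f.
  rewrite big_seq [RHS]big_seq; apply: eq_bigr => i.
  by rewrite mem_undup => /mapP [p pl ->]; rewrite Pl.
Qed.

Lemma mIl0 : mIl 0.
Proof. by exists [::]; split => //; split => //; rewrite big_nil. Qed.
Lemma mIl_hom i u : 0 < i -> G i u -> mIl u.
Proof.
move=> hi gu; exists [:: (i, u)]; split; last by move=> p; rewrite inE => /eqP ->.
split; last by rewrite big_seq1.
by move=> p; rewrite inE => /eqP ->.
Qed.
Lemma mIlD u v : mIl u -> mIl v -> mIl (u + v).
Proof.
move=> [l [[Dl El] Pl]] [l' [[Dl' El'] Pl']].
exists (l ++ l'); split; last by move=> p; rewrite mem_cat => /orP [/Pl|/Pl'].
split; last by rewrite big_cat El El'.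
by move=> p; rewrite mem_cat => /orP [/Dl|/Dl'].
Qed.
Lemma mIlZ c u : mIl u -> mIl (c *: u).
Proof.
move=> [l [[Dl El] Pl]].
exists [seq (p.1, c *: p.2) | p <- l]; split.
  split; last by rewrite big_map El scaler_sumr.
  by move=> p /mapP [q ql ->] /=; apply: GZ => //; apply: Dl.
by move=> p /mapP [q ql ->] /=; apply: Pl.
Qed.
Lemma mIlN u : mIl u -> mIl (- u).
Proof. by move=> H; rewrite -scaleN1r; apply: mIlZ. Qed.
Lemma mIlB u v : mIl u -> mIl v -> mIl (u - v).
Proof. by move=> Hu Hv; apply: mIlD => //; apply: mIlN. Qed.
Lemma mIlM u v : mIl u -> mIl v -> mIl (u * v).
Proof.
move=> [l [[Dl El] Pl]] [l' [[Dl' El'] Pl']].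
exists [seq (p.1 + q.1, p.2 * q.2) | p <- l, q <- l']; split.
  split.
    move=> p /allpairsP [[q q'] [ql ql' ->]] /=.
    by apply: (GM HG); [apply: Dl | apply: Dl'].
  rewrite big_allpairs_dep /= El El' mulr_suml; apply: eq_bigr => p _.
  by rewrite mulr_sumr.
move=> p /allpairsP [[q q'] [ql ql' ->]] /=.
by apply: addr_gt0; [apply: Pl | apply: Pl'].
Qed.
Lemma mIl_G0 u : mIl u -> G 0 u -> u = 0.
Proof.
move=> [l [Dl Pl]] gu.
have := dec_hom 0 Dl gu; rewrite eqxx => <-.
rewrite big_seq_cond big1 // => p /andP [pl /eqP p0].
by have := Pl p pl; rewrite p0 ltxx.
Qed.

Definition mI2 := in_max_ideal_sq G.
Lemma mI2_0 : mI2 0.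
Proof. by exists [::]; split => //; rewrite big_nil. Qed.
Lemma mI2D u v : mI2 u -> mI2 v -> mI2 (u + v).
Proof.
move=> [l [Pl ->]] [l' [Pl' ->]]; exists (l ++ l'); split; last by rewrite big_cat.
by move=> p; rewrite mem_cat => /orP [/Pl|/Pl'].
Qed.
Lemma mI2Z c u : mI2 u -> mI2 (c *: u).
Proof.
move=> [l [Pl ->]]; exists [seq (c *: p.1, p.2) | p <- l]; split.
  move=> p /mapP [q ql ->] /=; have [H1 H2] := Pl q ql; split => //.
  by apply/mI_iff; apply: mIlZ; apply/mI_iff.
by rewrite big_map scaler_sumr; apply: eq_bigr => p _; rewrite scalerAl.
Qed.
Lemma mI2N u : mI2 u -> mI2 (- u).
Proof. by move=> H; rewrite -scaleN1r; apply: mI2Z. Qed.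
Lemma mI2B u v : mI2 u -> mI2 v -> mI2 (u - v).
Proof. by move=> Hu Hv; apply: mI2D => //; apply: mI2N. Qed.
Lemma mI2_mul a b : mIl a -> mIl b -> mI2 (a * b).
Proof.
move=> Ha Hb; exists [:: (a, b)]; split; last by rewrite big_seq1.
by move=> p; rewrite inE => /eqP -> /=; split; apply/mI_iff.
Qed.
Lemma mI2_mulr q w : mI2 q -> mIl w -> mI2 (q * w).
Proof.
move=> [l [Pl ->]] Hw; exists [seq (p.1, p.2 * w) | p <- l]; split.
  move=> p /mapP [r rl ->] /=; have [H1 H2] := Pl r rl; split => //.
  by apply/mI_iff; apply: mIlM => //; apply/mI_iff.
by rewrite big_map mulr_suml; apply: eq_bigr => p _; rewrite mulrA.
Qed.
Lemma mI2_mull q w : mI2 q -> mIl w -> mI2 (w * q).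
Proof.
move=> [l [Pl ->]] Hw; exists [seq (w * p.1, p.2) | p <- l]; split.
  move=> p /mapP [r rl ->] /=; have [H1 H2] := Pl r rl; split => //.
  by apply/mI_iff; apply: mIlM => //; apply/mI_iff.
by rewrite big_map mulr_sumr; apply: eq_bigr => p _; rewrite mulrA.
Qed.
Lemma mI2_mI q : mI2 q -> mIl q.
Proof.
move=> [l [Pl ->]]; elim: l Pl => [|p l IH] Pl; first by rewrite big_nil; apply: mIl0.
rewrite big_cons; apply: mIlD.
  by have [H1 H2] := Pl p (mem_head _ _); apply: mIlM; apply/mI_iff.
by apply: IH => r rl; apply: Pl; rewrite inE rl orbT.
Qed.

Hypothesis HcG : connected_Ngraded G.
Lemma split_scal w : exists (c : k) w', mIl w' /\ w = c *: 1 + w'.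
Proof.
have [Dl El] := choose_decP HG w; set l := choose_dec HG w in Dl El.
have [c Hc] : exists c : k, \sum_(p <- l | p.1 == 0) p.2 = c *: 1.
  elim: l Dl {El} => [|q l IH] Dl; first by exists 0; rewrite big_nil scale0r.
  have [c Hc] := IH (fun p pl => Dl p (@mem_behead _ (q :: l) p pl)).
  rewrite big_cons; case: eqP => q0; last by exists c.
  have gq := Dl q (mem_head _ _); rewrite q0 in gq.
  case: HcG => _ _ /(_ q.2) [/(_ gq) [c' ->] _].
  by exists (c' + c); rewrite Hc scalerDl.
exists c, (\sum_(p <- l | 0 < p.1) p.2); split.
  exists (filter (fun p => 0 < p.1) l); split; last by move=> p; rewrite mem_filter => /andP [].
  split; last by rewrite big_filter.
  by move=> p; rewrite mem_filter => /andP [_ /Dl].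
rewrite El (bigID (fun p => p.1 == 0)) /= Hc; congr (_ + _).
rewrite (bigID (fun p => 0 < p.1)) /= [X in _ + X]big_seq_cond [X in _ + X]big1 ?addr0.
  by apply: eq_bigl => p; apply/idP/idP => [/andP [_ ->] //| H]; rewrite H andbT; apply/eqP => E; move: H; rewrite E ltxx.
move=> p /andP [pl /andP [p0 pn]].
case: HcG => _ /(_ p.1 p.2) H _; apply: H; last exact: Dl.
move: p0 pn; rewrite -leNgt le_eqVlt => i0 /orP [/eqP E|//]; by move: i0; rewrite E eqxx.
Qed.
End MaxI.


Section LiftLin.
Variables (k : fieldType) (B : algType k) (G : int -> B -> Prop).
Hypothesis HG : Zgraded G.
Variables (C : lmodType k) (Psi : int -> B -> C).
Hypothesis HPsi : forall i, klinear (Psi i).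

Lemma Lift_klinear : klinear (Lift HG Psi).
Proof.
have HA : forall i, addF (Psi i) by move=> i; apply: klinear_addF.
move=> a x y; rewrite (addFD (Lift_addF HG HA)); congr (_ + _).
have [Dx Hx] := choose_decP HG x.
rewrite (@LiftE _ _ _ HG _ _ HA [seq (p.1, a *: p.2) | p <- choose_dec HG x]).
  rewrite big_map /= /Lift scaler_sumr; apply: eq_bigr => p _.
  by rewrite (klinearZ (HPsi _)).
split; last by rewrite big_map /= {1}Hx scaler_sumr.
move=> p /mapP [q qx ->] /=; apply: GZ; [exact: HGs | exact: Dx].
Qed.
End LiftLin.

Lemma prod_ident (k : fieldType) (V : lmodType k) (P w w' Q Q' one : V) (c c' : k) :
  P + c' *: w + c *: w' + (c * c') *: one - ((c * c') *: one + (c *: Q' + c' *: Q))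
  = P + (c' *: (w - Q) + c *: (w' - Q')).
Proof.
rewrite addrKA !scalerBr -!addrA; congr (P + (c' *: w + _)).
by rewrite opprD [RHS]addrCA [- (c *: Q') + _]addrC.
Qed.

Lemma prod_expand (k : fieldType) (R : algType k) (w w' : R) (c c' : k) :
  (w + c *: 1) * (w' + c' *: 1) = w * w' + c' *: w + c *: w' + (c * c') *: 1.
Proof.
rewrite mulrDl !mulrDr -scalerAr mulr1 -!scalerAl mul1r -scalerAr mulr1 scalerA.
by rewrite !addrA.
Qed.

Section Tdef.
Variables (k : fieldType) (V : algType k).

Definition Tf (i : int) (u : V) : (int -> V) -> (int -> V) := fun phi n => u * phi (n - i).
Lemma TP i u : linP (Tf i u).
Proof.
move=> a phi psi; apply: functional_extensionality => n.
by rewrite /Tf mulrDr scalerAr.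
Qed.
Definition T i u : Endo V := MkEndo (TP i u).

Lemma T_klinear i : klinear (T i).
Proof. by move=> a u v; apply: endo_ext => phi n /=; rewrite /Tf mulrDl -scalerAl. Qed.
Lemma T_addF i : addF (T i). Proof. exact: klinear_addF (T_klinear i). Qed.
Lemma TM i j u v : T i u * T j v = T (i + j) (u * v).
Proof. by apply: endo_ext => phi n /=; rewrite /emulf /Tf mulrA opprD addrA. Qed.
Lemma T01 : T 0 1 = 1.
Proof. by apply: endo_ext => phi n /=; rewrite /Tf mul1r subr0. Qed.
Definition delta : int -> V := fun j => if j == 0 then 1 else 0.
Lemma T_delta i u n : T i u delta n = if n == i then u else 0.
Proof. by rewrite /= /Tf /delta subr_eq0; case: eqP; rewrite ?mulr1 ?mulr0. Qed.
End Tdef.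

Section Trdef.
Variables (k : fieldType) (V : algType k).

Definition trc (i n : int) : bool := (i == 0) || ((0 <= n - i) && (n <= 3)).
Definition Trf (i : int) (a : V) : (int -> V) -> (int -> V) :=
  fun phi n => if trc i n then a * phi (n - i) else 0.
Lemma TrP i a : linP (Trf i a).
Proof.
move=> c phi psi; apply: functional_extensionality => n.
rewrite /Trf; case: ifP => _; first by rewrite mulrDr scalerAr.
by rewrite scaler0 addr0.
Qed.
Definition Tr i a : Endo V := MkEndo (TrP i a).

Lemma Tr_klinear i : klinear (Tr i).
Proof.
move=> c a b; apply: endo_ext => phi n; rewrite endo_addE endo_scaleE /= /Trf.
case: ifP => _; last by rewrite scaler0 addr0.
by rewrite mulrDl -scalerAl.
Qed.
Lemma Tr_addF i : addF (Tr i). Proof. exact: klinear_addF (Tr_klinear i). Qed.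

Lemma TrM i j a b : 0 <= i -> 0 <= j -> Tr i a * Tr j b = Tr (i + j) (a * b).
Proof.
move=> hi hj; apply: endo_ext => phi n /=; rewrite /emulf /Trf /trc.
rewrite opprD addrA.
case: (i =P 0) => [->|i0]; case: (j =P 0) => [->|j0].
- by rewrite !add0r !subr0 /= mulrA.
- rewrite !add0r !subr0 /= (negPf (introN eqP j0)) /=.
  by case: ifP => _; rewrite ?mulr0 // mulrA.
- rewrite ?subr0 ?addr0 /= (negPf (introN eqP i0)) /=.
  by case: ifP => _; rewrite ?mulr0 // mulrA.
- have ij0 : (i + j == 0) = false by apply/eqP; lia.
  rewrite ij0 /=.
  case: (boolP ((0 <= n - i) && (n <= 3))) => H1;
  case: (boolP ((0 <= n - i - j) && (n - i <= 3))) => H2;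
  case: (boolP ((0 <= n - i - j) && (n <= 3))) => H3;
  rewrite ?mulr0 ?mulrA //; exfalso; move: H1 H2 H3; lia.
Qed.

Lemma Tr_big i a : 4 <= i -> Tr i a = 0.
Proof.
move=> hi; apply: endo_ext => phi n /=; rewrite /Trf /trc /e0f.
have -> : (i == 0) = false by apply/eqP; lia.
have -> : (0 <= n - i) && (n <= 3) = false by apply/negP => /andP [H1 H2]; lia.
by [].
Qed.

Lemma Tr01 : Tr 0 1 = 1.
Proof. by apply: endo_ext => phi n /=; rewrite /Trf /trc eqxx /= mul1r subr0. Qed.

Lemma Tr_delta i a n : Tr i a (delta V) n = if trc i n && (n == i) then a else 0.
Proof.
rewrite /= /Trf /delta subr_eq0; case: ifP => _ /=; last by [].
by case: eqP; rewrite ?mulr1 ?mulr0.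
Qed.
End Trdef.

Section Main.
Variables (k : fieldType) (A : comAlgType k) (br : A -> A -> A) (U : algType k)
  (m h : A -> U).
Hypotheses (Hbr : is_Poisson_bracket br) (Henv : is_Poisson_enveloping br m h).

Lemma rels : PEA_relations br m h. Proof. by case: Henv. Qed.
Lemma lm : klinear m. Proof. by case: rels => -[]. Qed.
Lemma lh : klinear h. Proof. by case: rels => -[]. Qed.
Lemma mM x y : m (x * y) = m x * m y. Proof. by case: rels => -[]. Qed.
Lemma hB x y : h (br x y) = h x * h y - h y * h x. Proof. by case: rels => -[]. Qed.
Lemma hM x y : h (x * y) = m y * h x + m x * h y. Proof. by case: rels => _ []. Qed.
Lemma mB x y : m (br x y) = h x * m y - m y * h x. Proof. by case: rels => _ []. Qed.
Lemma m1 : m 1 = 1. Proof. by case: rels => _ []. Qed.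
Lemma h1 : h 1 = 0.
Proof.
have := hM 1 1; rewrite mulr1 m1 mul1r => E.
by apply: (@addrI _ (h 1)); rewrite addr0 -E.
Qed.
Lemma maddF : addF m. Proof. exact: klinear_addF lm. Qed.
Lemma haddF : addF h. Proof. exact: klinear_addF lh. Qed.
Lemma brl z : klinear (br^~ z). Proof. by case: Hbr => H _ _ _ _ a x y; apply: H. Qed.
Lemma brr z : klinear (br z). Proof. by case: Hbr => _ H _ _ _ a x y; apply: H. Qed.
Lemma brladdF z : addF (br^~ z). Proof. exact: klinear_addF (brl z). Qed.
Lemma brraddF z : addF (br z). Proof. exact: klinear_addF (brr z). Qed.

Section Grad.
Variables (GA : int -> A -> Prop) (d : int).
Hypotheses (HGA : Zgraded GA) (Hbh : bracket_homog br GA d).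

Definition Psim i a : Endo U := T i (m a).
Definition Psih i a : Endo U := T (i + d) (h a).
Lemma Psim_lin i : klinear (Psim i).
Proof. by move=> a x y; rewrite /Psim lm T_klinear. Qed.
Lemma Psih_lin i : klinear (Psih i).
Proof. by move=> a x y; rewrite /Psih lh T_klinear. Qed.
Lemma Psim_add i : addF (Psim i). Proof. exact: klinear_addF (Psim_lin i). Qed.
Lemma Psih_add i : addF (Psih i). Proof. exact: klinear_addF (Psih_lin i). Qed.

Definition m' := Lift HGA Psim.
Definition h' := Lift HGA Psih.
Lemma m'add : addF m'. Proof. exact: Lift_addF Psim_add. Qed.
Lemma h'add : addF h'. Proof. exact: Lift_addF Psih_add. Qed.
Lemma m'hom i x : GA i x -> m' x = T i (m x).
Proof. by move=> gx; rewrite /m' (Lift_hom _ Psim_add gx). Qed.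
Lemma h'hom i x : GA i x -> h' x = T (i + d) (h x).
Proof. by move=> gx; rewrite /h' (Lift_hom _ Psih_add gx). Qed.

Lemma rels' : PEA_relations br m' h'.
Proof.
split; split.
- exact: Lift_klinear Psim_lin.
- exact: Lift_klinear Psih_lin.
- apply: (bilin_ext HGA (F1 := fun x y => m' (x * y)) (F2 := fun x y => m' x * m' y)).
  + by move=> x; apply: addF_comp m'add (addF_mull x).
  + by move=> y; apply: addF_comp m'add (addF_mulr y).
  + by move=> x; apply: addF_comp (addF_mull _) m'add.
  + by move=> y; apply: addF_comp (addF_mulr _) m'add.
  + move=> i j x y gx gy /=.
    by rewrite (m'hom (GM HGA gx gy)) (m'hom gx) (m'hom gy) TM mM.
- apply: (bilin_ext HGA (F1 := fun x y => h' (br x y))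
     (F2 := fun x y => h' x * h' y - h' y * h' x)).
  + by move=> x; apply: addF_comp h'add (brraddF x).
  + by move=> y; apply: addF_comp h'add (brladdF y).
  + move=> x; apply: addF_sub.
      exact: addF_comp (addF_mull _) h'add.
    exact: addF_comp (addF_mulr _) h'add.
  + move=> y; apply: addF_sub.
      exact: addF_comp (addF_mulr _) h'add.
    exact: addF_comp (addF_mull _) h'add.
  + move=> i j x y gx gy /=.
    rewrite (h'hom (Hbh gx gy)) (h'hom gx) (h'hom gy) !TM hB (T_addF _ _ _).
    by congr (T _ _ - T _ _); ring.
- apply: (bilin_ext HGA (F1 := fun x y => h' (x * y))
     (F2 := fun x y => m' y * h' x + m' x * h' y)).
  + by move=> x; apply: addF_comp h'add (addF_mull x).
  + by move=> y; apply: addF_comp h'add (addF_mulr y).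
  + move=> x; apply: addF_add.
      exact: addF_comp (addF_mulr _) m'add.
    exact: addF_comp (addF_mull _) h'add.
  + move=> y; apply: addF_add.
      exact: addF_comp (addF_mull _) h'add.
    exact: addF_comp (addF_mulr _) m'add.
  + move=> i j x y gx gy /=.
    rewrite (h'hom (GM HGA gx gy)) (h'hom gx) (h'hom gy) (m'hom gx) (m'hom gy) !TM hM.
    rewrite (addFD (T_addF _)).
    by congr (T _ _ + T _ _); ring.
- apply: (bilin_ext HGA (F1 := fun x y => m' (br x y))
     (F2 := fun x y => h' x * m' y - m' y * h' x)).
  + by move=> x; apply: addF_comp m'add (brraddF x).
  + by move=> y; apply: addF_comp m'add (brladdF y).
  + move=> x; apply: addF_sub.
      exact: addF_comp (addF_mull _) m'add.
    exact: addF_comp (addF_mulr _) m'add.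
  + move=> y; apply: addF_sub.
      exact: addF_comp (addF_mulr _) h'add.
    exact: addF_comp (addF_mull _) h'add.
  + move=> i j x y gx gy /=.
    rewrite (m'hom (Hbh gx gy)) (h'hom gx) (m'hom gy) !TM mB (T_addF _ _ _).
    by congr (T _ _ - T _ _); ring.
- by rewrite (m'hom (G1 HGA)) m1 T01.
Qed.

Lemma phi_ex : exists phi : U -> Endo U,
  [/\ alg_morph phi, (forall x, phi (m x) = m' x) & (forall x, phi (h x) = h' x)].
Proof.
case: Henv => _ /(_ _ m' h' rels') [phi [Hp Hm Hh _]].
by exists phi.
Qed.

Definition phi : U -> Endo U :=
  proj1_sig (constructive_indefinite_description _ phi_ex).
Lemma phiP : [/\ alg_morph phi, (forall x, phi (m x) = m' x) & (forall x, phi (h x) = h' x)].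
Proof. exact: (proj2_sig (constructive_indefinite_description _ phi_ex)). Qed.
Lemma phi_lin : klinear phi. Proof. by case: phiP => -[]. Qed.
Lemma phi_add : addF phi. Proof. exact: klinear_addF phi_lin. Qed.
Lemma phiM x y : phi (x * y) = phi x * phi y. Proof. by case: phiP => -[]. Qed.
Lemma phi1 : phi 1 = 1. Proof. by case: phiP => -[]. Qed.
Lemma phim x : phi (m x) = m' x. Proof. by case: phiP. Qed.
Lemma phih x : phi (h x) = h' x. Proof. by case: phiP. Qed.

Definition GU (i : int) (u : U) : Prop := phi u = T i u.

Lemma GUs i : is_subspace (GU i).
Proof.
split; first by rewrite /GU (addF0 phi_add) (addF0 (T_addF i)).
by move=> a x y; rewrite /GU phi_lin T_klinear => -> ->.
Qed.
Lemma GUM i j x y : GU i x -> GU j y -> GU (i + j) (x * y).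
Proof. by rewrite /GU phiM => -> ->; rewrite TM. Qed.
Lemma GU1 : GU 0 1.
Proof. by rewrite /GU phi1 T01. Qed.
Lemma GUm i x : GA i x -> GU i (m x).
Proof. by move=> gx; rewrite /GU phim (m'hom gx). Qed.
Lemma GUh i x : GA i x -> GU (i + d) (h x).
Proof. by move=> gx; rewrite /GU phih (h'hom gx). Qed.

Lemma decU_all (P : int -> U -> Prop) :
  P 0 1 -> (forall i c v, P i v -> P i (c *: v)) ->
  (forall i j u v, GU i u -> GU j v -> P i u -> P j v -> P (i + j) (u * v)) ->
  (forall i a, GA i a -> P i (m a) /\ P (i + d) (h a)) ->
  forall u, exists l, Dec GU l u /\ (forall p, p \in l -> P p.1 p.2).
Proof.
move=> P1 PZ PM Pgen.
pose S u := exists l, Dec GU l u /\ (forall p, p \in l -> P p.1 p.2).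
apply: (@gen_all _ _ br _ m h Henv S).
- exists [:: (0, 1)]; split; last by move=> p; rewrite inE => /eqP ->.
  split; last by rewrite big_seq1.
  by move=> p; rewrite inE => /eqP -> /=; apply: GU1.
- by exists [::]; split => //; split => //; rewrite big_nil.
- move=> x y [l [[Dl El] Pl]] [l' [[Dl' El'] Pl']].
  exists (l ++ l'); split; last by move=> p; rewrite mem_cat => /orP [/Pl|/Pl'].
  split; last by rewrite big_cat El El'.
  by move=> p; rewrite mem_cat => /orP [/Dl|/Dl'].
- move=> a x [l [[Dl El] Pl]].
  exists [seq (p.1, a *: p.2) | p <- l]; split.
    split; last by rewrite big_map El scaler_sumr.
    by move=> p /mapP [q ql ->] /=; apply: GZ; [exact: GUs | exact: Dl].
  by move=> p /mapP [q ql ->] /=; apply: PZ; apply: Pl.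
- move=> x y [l [[Dl El] Pl]] [l' [[Dl' El'] Pl']].
  exists [seq (p.1 + q.1, p.2 * q.2) | p <- l, q <- l']; split.
    split.
      move=> p /allpairsP [[q q'] [ql ql' ->]] /=.
      by apply: GUM; [apply: Dl | apply: Dl'].
    rewrite big_allpairs_dep /= El El' mulr_suml; apply: eq_bigr => p _.
    by rewrite mulr_sumr.
  move=> p /allpairsP [[q q'] [ql ql' ->]] /=.
  by apply: PM; [apply: Dl | apply: Dl' | apply: Pl | apply: Pl'].
- move=> x; have [Dx Ex] := choose_decP HGA x.
  exists [seq (p.1, m p.2) | p <- choose_dec HGA x]; split.
    split; last by rewrite big_map {1}Ex (addF_sum maddF).
    by move=> p /mapP [q ql ->] /=; apply: GUm; apply: Dx.
  by move=> p /mapP [q ql ->] /=; case: (Pgen _ _ (Dx _ ql)).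
- move=> x; have [Dx Ex] := choose_decP HGA x.
  exists [seq (p.1 + d, h p.2) | p <- choose_dec HGA x]; split.
    split; last by rewrite big_map {1}Ex (addF_sum haddF).
    by move=> p /mapP [q ql ->] /=; apply: GUh; apply: Dx.
  by move=> p /mapP [q ql ->] /=; case: (Pgen _ _ (Dx _ ql)).
Qed.

Lemma GU_graded : Zgraded GU.
Proof.
split.
- exact: GUs.
- move=> u.
  have [l [[Dl El] _]] := @decU_all (fun _ _ => True) I (fun _ _ _ _ => I)
     (fun _ _ _ _ _ _ _ _ => I) (fun _ _ _ => conj I I) u.
  set s := undup [seq p.1 | p <- l].
  exists s, (fun i => \sum_(p <- l | p.1 == i) p.2); split.
    move=> i; rewrite -big_filter; apply: Gsum; first exact: GUs.
    by move=> p; rewrite mem_filter => /andP [/eqP <- pl]; apply: Dl.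
  rewrite El; apply: sum_group; first exact: undup_uniq.
  by move=> p pl; rewrite mem_undup; apply: map_f.
- move=> s f us Hf H0 i iin.
  have := congr1 (fun X : Endo U => X (delta U) i) (congr1 phi H0).
  rewrite (addF_sum phi_add) (addF0 phi_add) endo_sumE.
  rewrite (eq_bigr (fun j => if i == j then f j else 0)); last first.
    by move=> j _; rewrite (Hf j) T_delta.
  rewrite -big_mkcond /= (eq_bigl (fun j => j == i)); last by move=> j; rewrite eq_sym.
  by rewrite sum_pred1.
- by move=> i j x y; apply: GUM.
- exact: GU1.
Qed.

Lemma GU_deg : PEA_degrees m h GA GU d.
Proof. by move=> i x gx; split; [apply: GUm | apply: GUh]. Qed.

Lemma dec_homU l u i n : Dec GU l u -> GU i u ->
  \sum_(p <- l | p.1 == n) p.2 = if n == i then u else 0.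
Proof.
move=> D gu.
have HPsi : forall j, addF (fun v : U => if j == n then v else 0).
  by move=> j a b; case: (j == n); rewrite ?subrr.
have D1 : Dec GU [:: (i, u)] u.
  split; last by rewrite big_seq1.
  by move=> p; rewrite inE => /eqP ->.
have := dec_indep GU_graded HPsi D D1.
rewrite big_seq1 /= -big_mkcond => ->.
by rewrite eq_sym.
Qed.

Section Conn.
Hypotheses (HcA : connected_Ngraded GA) (d0 : 0 <= d).

Lemma Aneg i x : i < 0 -> GA i x -> x = 0.
Proof. by case: HcA => _ H _; apply: H. Qed.
Lemma A0 x : GA 0 x -> exists c : k, x = c *: 1.
Proof. by case: HcA => _ _ H; case: (H x). Qed.

Definition Pc (i : int) (v : U) : Prop :=
  (i < 0 -> v = 0) /\ (i = 0 -> exists c : k, v = c *: 1).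

Lemma Pc0 i : Pc i 0.
Proof. by split => // _; exists 0; rewrite scale0r. Qed.

Lemma Pc1 : Pc 0 1.
Proof. by split => // _; exists 1; rewrite scale1r. Qed.
Lemma PcZ i c v : Pc i v -> Pc i (c *: v).
Proof.
move=> [H1 H2]; split.
  by move=> /H1 ->; rewrite scaler0.
by move=> /H2 [c' ->]; exists (c * c'); rewrite scalerA.
Qed.
Lemma PcM i j u v : Pc i u -> Pc j v -> Pc (i + j) (u * v).
Proof.
move=> [Hu1 Hu2] [Hv1 Hv2].
case: (ltrP i 0) => [/Hu1 ->|hi]; first by rewrite mul0r; apply: Pc0.
case: (ltrP j 0) => [/Hv1 ->|hj]; first by rewrite mulr0; apply: Pc0.
split; first by move=> H; exfalso; lia.
move=> H; have i0 : i = 0 by lia.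
have j0 : j = 0 by lia.
have [c ->] := Hu2 i0; have [c' ->] := Hv2 j0.
by exists (c * c'); rewrite -scalerAl mul1r scalerA.
Qed.
Lemma Pcgen i a : GA i a -> Pc i (m a) /\ Pc (i + d) (h a).
Proof.
move=> ga; case: (ltrP i 0) => [hi|hi].
  by rewrite (Aneg hi ga) (addF0 maddF) (addF0 haddF); split; apply: Pc0.
split; split.
- by move=> H; exfalso; lia.
- move=> i0; move: ga; rewrite i0 => /A0 [c ->].
  by exists c; rewrite (klinearZ lm) m1.
- by move=> H; exfalso; lia.
- move=> H; have i0 : i = 0 by lia.
  move: ga; rewrite i0 => /A0 [c ->].
  by exists 0; rewrite (klinearZ lh) h1 scaler0 scale0r.
Qed.

Lemma sum_scal1 (l : seq (int * U)) (P : pred (int * U)) :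
  (forall p, p \in l -> P p -> exists c : k, p.2 = c *: 1) ->
  exists c : k, \sum_(p <- l | P p) p.2 = c *: 1.
Proof.
elim: l => [|q l IH] H; first by exists 0; rewrite big_nil scale0r.
have [c Hc] : exists c : k, \sum_(p <- l | P p) p.2 = c *: 1.
  by apply: IH => p pl; apply: H; rewrite inE pl orbT.
rewrite big_cons; case: ifP => Pq; last by exists c.
have [c' Hc'] := H q (mem_head _ _) Pq.
by exists (c' + c); rewrite Hc Hc' scalerDl.
Qed.

Lemma GU_conn : connected_Ngraded GU.
Proof.
split.
- exact: GU_graded.
- move=> i x hi gx.
  have [l [Dl Pl]] := decU_all Pc1 PcZ (fun i j u v _ _ => @PcM i j u v) Pcgen x.
  have := dec_homU i Dl gx; rewrite eqxx => <-.
  rewrite big_seq_cond big1 // => p /andP [pl /eqP pi].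
  by case: (Pl p pl) => H _; apply: H; rewrite pi.
- move=> x; split.
    move=> gx.
    have [l [Dl Pl]] := decU_all Pc1 PcZ (fun i j u v _ _ => @PcM i j u v) Pcgen x.
    have := dec_homU 0 Dl gx; rewrite eqxx => <-.
    apply: sum_scal1 => p pl /eqP p0.
    by case: (Pl p pl) => _ H; apply: H.
  move=> [c ->]; apply: GZ; [exact: GUs | exact: GU1].
Qed.

Section Surj.
Hypothesis Hgen1 : forall a, in_gen_subalg (GA 1) a.

Local Notation mIU := (mIl GU).
Local Notation mI2U := (mI2 GU).
Local Notation mIA := (mIl GA).

Lemma mIU_m1 x : GA 1 x -> mIU (m x).
Proof. by move=> gx; apply: (@mIl_hom _ _ GU 1) => //; apply: GUm. Qed.
Lemma mIU_h1 y : GA 1 y -> mIU (h y).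
Proof.
move=> gy; apply: (@mIl_hom _ _ GU (1 + d)); last by apply: GUh.
by apply: (@lt_le_trans _ _ 1) => //; rewrite lerDl.
Qed.
Lemma mIA_1 x : GA 1 x -> mIA x.
Proof. by move=> gx; apply: (@mIl_hom _ _ GA 1). Qed.

Definition Rz (z : A) := [/\ mIA z, mI2U (m z) & mI2U (h z)].
Lemma Rz0 : Rz 0.
Proof. by split; [apply: mIl0 | rewrite (addF0 maddF); apply: mI2_0 | rewrite (addF0 haddF); apply: mI2_0]. Qed.
Lemma RzD z z' : Rz z -> Rz z' -> Rz (z + z').
Proof.
move=> [H1 H2 H3] [H1' H2' H3']; split; first exact: mIlD.
  by rewrite (addFD maddF); apply: mI2D.
by rewrite (addFD haddF); apply: mI2D.
Qed.
Lemma RzZ c z : Rz z -> Rz (c *: z).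
Proof.
move=> [H1 H2 H3]; split; first exact: (mIlZ HGA).
  by rewrite (klinearZ lm); apply: (mI2Z GU_graded).
by rewrite (klinearZ lh); apply: (mI2Z GU_graded).
Qed.
Lemma Rz_mul a b : mIA a -> mIA b -> mIU (m a) -> mIU (m b) -> mIU (h a) -> mIU (h b) ->
  Rz (a * b).
Proof.
move=> Ha Hb Hma Hmb Hha Hhb; split; first exact: (mIlM HGA).
  by rewrite mM; apply: (mI2_mul GU_graded).
by rewrite hM; apply: mI2D; apply: (mI2_mul GU_graded).
Qed.
Lemma Rz_mI z : Rz z -> [/\ mIA z, mIU (m z) & mIU (h z)].
Proof. by move=> [H1 H2 H3]; split => //; apply: (mI2_mI GU_graded). Qed.

Definition QA (a : A) := exists (c : k) x z, [/\ GA 1 x, a = c *: 1 + x + z & Rz z].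

Lemma QA_all a : QA a.
Proof.
apply: Hgen1; last first.
  by move=> x gx; exists 0, x, 0; split => //; [rewrite scale0r add0r addr0 | apply: Rz0].
have G1s := HGs HGA 1.
split.
- by exists 0, 0, 0; split; [exact: (G0 (HGs HGA)) | rewrite scale0r !addr0 | apply: Rz0].
- by exists 1, 0, 0; split; [exact: (G0 (HGs HGA)) | rewrite scale1r !addr0 | apply: Rz0].
- move=> al x y [c [x1 [z [g1 -> R1]]]] [c' [x1' [z' [g1' -> R1']]]].
  exists (al * c + c'), (al *: x1 + x1'), (al *: z + z'); split.
  + exact: (GZD (HGs HGA)).
  + rewrite scalerDl -scalerA !scalerDr.
    move: (al *: (c *: (1 : A))) (al *: x1) (al *: z) (c' *: (1 : A)) => a1 a2 a3 a4.
    by ring.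
  + by apply: RzD => //; apply: RzZ.
- move=> x y [c [x1 [z [g1 -> R1]]]] [c' [x1' [z' [g1' -> R1']]]].
  exists (c * c'), (c *: x1' + c' *: x1),
    (x1 * x1' + x1 * z' + z * x1' + z * z' + c *: z' + c' *: z); split.
  + by apply: (GD (HGs HGA)); apply: (GZ (HGs HGA)).
  + have E1 : forall (e : k) (v : A), e *: v = (e *: 1) * v by move=> e v; rewrite mulr_algl.
    rewrite (E1 c x1') (E1 c' x1) (E1 c z') (E1 c' z) -scalerA (E1 c (c' *: 1)).
    move: (c *: (1 : A)) (c' *: (1 : A)) => C C'.
    by ring.
  + have [Ha1 Hm1 Hh1] := Rz_mI R1; have [Ha1' Hm1' Hh1'] := Rz_mI R1'.
    repeat apply: RzD; try apply: RzZ => //; apply: Rz_mul => //;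
      by [apply: mIA_1 | apply: mIU_m1 | apply: mIU_h1].
Qed.

Definition Lf (c : k) x y : U := c *: 1 + (m x + h y).
Definition QU u := exists (c : k) x y, [/\ GA 1 x, GA 1 y & mI2U (u - Lf c x y)].

Lemma Lf_add c c' x x' y y' : Lf (c + c') (x + x') (y + y') = Lf c x y + Lf c' x' y'.
Proof.
rewrite /Lf scalerDl (addFD maddF) (addFD haddF) [RHS]addrACA; congr (_ + _).
by rewrite addrACA.
Qed.
Lemma Lf_scale a c x y : a *: Lf c x y = Lf (a * c) (a *: x) (a *: y).
Proof. by rewrite /Lf !scalerDr scalerA (klinearZ lm) (klinearZ lh). Qed.
Lemma Lf_lin (c c' : k) x x' y y' :
  m (c *: x' + c' *: x) + h (c *: y' + c' *: y) = c *: (m x' + h y') + c' *: (m x + h y).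
Proof.
by rewrite (addFD maddF) (addFD haddF) !(klinearZ lm) !(klinearZ lh) !scalerDr [RHS]addrACA.
Qed.

Lemma QU_all u : QU u.
Proof.
have G1s := HGs HGA 1.
apply: (@gen_all _ _ br _ m h Henv QU).
- exists 1, 0, 0; split; try exact: (G0 (HGs HGA)).
  rewrite /Lf scale1r (addF0 maddF) (addF0 haddF) !addr0 subrr; exact: mI2_0.
- exists 0, 0, 0; split; try exact: (G0 (HGs HGA)).
  rewrite /Lf scale0r (addF0 maddF) (addF0 haddF) !addr0 subrr; exact: mI2_0.
- move=> u1 v1 [c [x [y [gx gy r]]]] [c' [x' [y' [gx' gy' r']]]].
  exists (c + c'), (x + x'), (y + y'); split; try exact: (GD (HGs HGA)).
  by rewrite Lf_add opprD addrACA; apply: mI2D.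
- move=> a u1 [c [x [y [gx gy r]]]].
  exists (a * c), (a *: x), (a *: y); split; try exact: (GZ (HGs HGA)).
  by rewrite -Lf_scale -scalerBr; apply: (mI2Z GU_graded).
- move=> u1 v1 [c [x [y [gx gy r]]]] [c' [x' [y' [gx' gy' r']]]].
  exists (c * c'), (c *: x' + c' *: x), (c *: y' + c' *: y); split.
  + by apply: (GD (HGs HGA)); apply: (GZ (HGs HGA)).
  + by apply: (GD (HGs HGA)); apply: (GZ (HGs HGA)).
  set w := u1 - c *: 1; set w' := v1 - c' *: 1.
  have Eu : u1 = w + c *: 1 by rewrite subrK.
  have Ev : v1 = w' + c' *: 1 by rewrite subrK.
  have Ew : u1 - Lf c x y = w - (m x + h y) by rewrite /Lf opprD addrA.
  have Ew' : v1 - Lf c' x' y' = w' - (m x' + h y') by rewrite /Lf opprD addrA.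
  clearbody w w'.
  have mw : mIU w.
    have -> : w = (u1 - Lf c x y) + (m x + h y) by rewrite Ew subrK.
    apply: mIlD; first exact: (mI2_mI GU_graded).
    by apply: mIlD; [apply: mIU_m1 | apply: mIU_h1].
  have mw' : mIU w'.
    have -> : w' = (v1 - Lf c' x' y') + (m x' + h y') by rewrite Ew' subrK.
    apply: mIlD; first exact: (mI2_mI GU_graded).
    by apply: mIlD; [apply: mIU_m1 | apply: mIU_h1].
  have -> : u1 * v1 = w * w' + c' *: w + c *: w' + (c * c') *: 1.
    by rewrite Eu Ev prod_expand.
  rewrite /Lf Lf_lin (prod_ident (w * w')) -Ew -Ew'.
  apply: mI2D; first exact: (mI2_mul GU_graded).
  by apply: mI2D; apply: (mI2Z GU_graded).
- move=> a; have [c [x [z [gx Ea Rz']]]] := QA_all a.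
  exists c, x, 0; split => //; first exact: (G0 (HGs HGA)).
  have -> : m a - Lf c x 0 = m z.
    rewrite Ea /Lf (addF0 haddF) addr0 !(addFD maddF) (klinearZ lm) m1.
    by rewrite addrC addKr.
  by case: Rz'.
- move=> a; have [c [x [z [gx Ea Rz']]]] := QA_all a.
  exists 0, 0, x; split => //; first exact: (G0 (HGs HGA)).
  have -> : h a - Lf 0 0 x = h z.
    rewrite Ea /Lf (addF0 maddF) scale0r !add0r !(addFD haddF) (klinearZ lh) h1 scaler0 add0r.
    by rewrite addrC addKr.
  by case: Rz'.
Qed.

Lemma surj u : in_max_ideal GU u ->
  exists x y, [/\ GA 1 x, GA 1 y & in_max_ideal_sq GU (u - (m x + h y))].
Proof.
move=> /(mI_iff GU_graded) mu.
have [c [x [y [gx gy r]]]] := QU_all u.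
exists x, y; split => //.
have c0 : c *: (1 : U) = 0.
  apply: (mIl_G0 GU_graded); last by apply: (GZ GUs); apply: GU1.
  have -> : c *: 1 = u - (u - Lf c x y) - (m x + h y).
    by rewrite opprB addrCA subrr addr0 /Lf addrK.
  apply: (mIlB GU_graded).
    by apply: (mIlB GU_graded) => //; exact: (mI2_mI GU_graded).
  by apply: mIlD; [apply: mIU_m1 | apply: mIU_h1].
by move: r; rewrite /Lf c0 add0r.
Qed.
End Surj.

Section Chi.
Lemma bilin_pos (C : zmodType) (F1 F2 : A -> A -> C) :
  (forall x, addF (F1 x)) -> (forall y, addF (F1^~ y)) ->
  (forall x, addF (F2 x)) -> (forall y, addF (F2^~ y)) ->
  (forall i j x y, 0 <= i -> 0 <= j -> GA i x -> GA j y -> F1 x y = F2 x y) ->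
  forall x y, F1 x y = F2 x y.
Proof.
move=> H1 H1' H2 H2' H; apply: (bilin_ext HGA) => // i j x y gx gy.
case: (ltrP i 0) => hi.
  by rewrite (Aneg hi gx) (addF0 (H1' y)) (addF0 (H2' y)).
case: (ltrP j 0) => hj.
  by rewrite (Aneg hj gy) (addF0 (H1 x)) (addF0 (H2 x)).
exact: (H i j x y hi hj gx gy).
Qed.

Lemma br1l y : br 1 y = 0.
Proof.
case: Hbr => _ _ _ _ /(_ 1 1 y); rewrite !mulr1 !mul1r => E.
by apply: (@addrI _ (br 1 y)); rewrite addr0 -E.
Qed.
Lemma br_anti x y : br x y = - br y x.
Proof.
have := (let: And5 _ _ H _ _ := Hbr in H) (x + y).
rewrite (addFD (brladdF _)) !(addFD (brraddF _)).
have -> : br x x = 0 by case: Hbr.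
have -> : br y y = 0 by case: Hbr.
by rewrite add0r addr0 => /eqP; rewrite addr_eq0 => /eqP.
Qed.
Lemma br1r y : br y 1 = 0.
Proof. by rewrite br_anti br1l oppr0. Qed.
Lemma brA0l x y : GA 0 x -> br x y = 0.
Proof. by move=> /A0 [c ->]; rewrite (klinearZ (brl y)) br1l scaler0. Qed.
Lemma brA0r x y : GA 0 y -> br x y = 0.
Proof. by move=> /A0 [c ->]; rewrite (klinearZ (brr x)) br1r scaler0. Qed.

Definition Psicm (i : int) (a : A) : Endo A := Tr (2 * i) a.
Definition Psich (i : int) (a : A) : Endo A := if i == 1 then Tr 3 a else 0.
Lemma Psicm_lin i : klinear (Psicm i). Proof. exact: Tr_klinear. Qed.
Lemma Psich_lin i : klinear (Psich i).
Proof.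
rewrite /Psich; case: (i == 1); first exact: Tr_klinear.
by move=> a x y; rewrite scaler0 addr0.
Qed.
Lemma Psicm_add i : addF (Psicm i). Proof. exact: klinear_addF (Psicm_lin i). Qed.
Lemma Psich_add i : addF (Psich i). Proof. exact: klinear_addF (Psich_lin i). Qed.

Definition cm := Lift HGA Psicm.
Definition ch := Lift HGA Psich.
Lemma cmadd : addF cm. Proof. exact: Lift_addF Psicm_add. Qed.
Lemma chadd : addF ch. Proof. exact: Lift_addF Psich_add. Qed.
Lemma cm_hom i x : GA i x -> cm x = Tr (2 * i) x.
Proof. by move=> gx; rewrite /cm (Lift_hom _ Psicm_add gx). Qed.
Lemma ch_hom i x : GA i x -> ch x = Psich i x.
Proof. by move=> gx; rewrite /ch (Lift_hom _ Psich_add gx). Qed.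

Lemma Tr0 (i : int) : Tr i (0 : A) = 0. Proof. exact: addF0 (Tr_addF i). Qed.

Lemma chi_rels : PEA_relations br cm ch.
Proof.
split; split.
- exact: Lift_klinear Psicm_lin.
- exact: Lift_klinear Psich_lin.
- apply: (bilin_pos (F1 := fun x y => cm (x * y)) (F2 := fun x y => cm x * cm y)).
  + by move=> x; apply: addF_comp cmadd (addF_mull x).
  + by move=> y; apply: addF_comp cmadd (addF_mulr y).
  + by move=> x; apply: addF_comp (addF_mull _) cmadd.
  + by move=> y; apply: addF_comp (addF_mulr _) cmadd.
  + move=> i j x y hi hj gx gy /=.
    rewrite (cm_hom (GM HGA gx gy)) (cm_hom gx) (cm_hom gy) TrM; try lia.
    by rewrite mulrDr.
- apply: (bilin_pos (F1 := fun x y => ch (br x y))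
     (F2 := fun x y => ch x * ch y - ch y * ch x)).
  + by move=> x; apply: addF_comp chadd (brraddF x).
  + by move=> y; apply: addF_comp chadd (brladdF y).
  + move=> x; apply: addF_sub.
      exact: addF_comp (addF_mull _) chadd.
    exact: addF_comp (addF_mulr _) chadd.
  + move=> y; apply: addF_sub.
      exact: addF_comp (addF_mulr _) chadd.
    exact: addF_comp (addF_mull _) chadd.
  + move=> i j x y hi hj gx gy /=.
    rewrite (ch_hom (Hbh gx gy)) (ch_hom gx) (ch_hom gy) /Psich.
    have -> : (if i == 1 then Tr 3 x else 0) * (if j == 1 then Tr 3 y else 0) -
              (if j == 1 then Tr 3 y else 0) * (if i == 1 then Tr 3 x else 0) = 0.
      case: (i == 1); case: (j == 1); rewrite ?mul0r ?mulr0 ?subrr //.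
      by rewrite !TrM // !Tr_big ?subrr.
    case: ifP => // H.
    have [i0|j0] : i = 0 \/ j = 0 by move/eqP: H; lia.
      by move: gx; rewrite i0 => /brA0l ->; rewrite Tr0.
    by move: gy; rewrite j0 => /brA0r ->; rewrite Tr0.
- apply: (bilin_pos (F1 := fun x y => ch (x * y))
     (F2 := fun x y => cm y * ch x + cm x * ch y)).
  + by move=> x; apply: addF_comp chadd (addF_mull x).
  + by move=> y; apply: addF_comp chadd (addF_mulr y).
  + move=> x; apply: addF_add.
      exact: addF_comp (addF_mulr _) cmadd.
    exact: addF_comp (addF_mull _) chadd.
  + move=> y; apply: addF_add.
      exact: addF_comp (addF_mull _) chadd.
    exact: addF_comp (addF_mulr _) cmadd.
  + move=> i j x y hi hj gx gy /=.
    rewrite (ch_hom (GM HGA gx gy)) (ch_hom gx) (ch_hom gy) (cm_hom gx) (cm_hom gy) /Psich.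
    case: (i =P 1) => [i1|i1]; case: (j =P 1) => [j1|j1].
    * by rewrite i1 j1 /= !TrM // !Tr_big // addr0.
    * rewrite mulr0 addr0 TrM; try lia.
      case: (j =P 0) => [j0|j0].
        by rewrite i1 j0 /= mulrC.
      rewrite (@Tr_big _ _ (2 * j + 3)); last lia.
      by have -> : (i + j == 1) = false by apply/eqP; lia.
    * rewrite mulr0 add0r TrM; try lia.
      case: (i =P 0) => [i0|i0].
        by rewrite i0 j1 /=.
      rewrite (@Tr_big _ _ (2 * i + 3)); last lia.
      by have -> : (i + j == 1) = false by apply/eqP; lia.
    * rewrite !mulr0 addr0.
      by have -> : (i + j == 1) = false by apply/eqP; lia.
- apply: (bilin_pos (F1 := fun x y => cm (br x y))
     (F2 := fun x y => ch x * cm y - cm y * ch x)).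
  + by move=> x; apply: addF_comp cmadd (brraddF x).
  + by move=> y; apply: addF_comp cmadd (brladdF y).
  + move=> x; apply: addF_sub.
      exact: addF_comp (addF_mull _) cmadd.
    exact: addF_comp (addF_mulr _) cmadd.
  + move=> y; apply: addF_sub.
      exact: addF_comp (addF_mulr _) chadd.
    exact: addF_comp (addF_mull _) chadd.
  + move=> i j x y hi hj gx gy /=.
    rewrite (cm_hom (Hbh gx gy)) (ch_hom gx) (cm_hom gy) /Psich.
    have -> : (if i == 1 then Tr 3 x else 0) * Tr (2 * j) y -
              Tr (2 * j) y * (if i == 1 then Tr 3 x else 0) = 0.
      case: (i == 1); rewrite ?mul0r ?mulr0 ?subrr //.
      by rewrite !TrM; try lia; rewrite [3 + _]addrC [x * y]mulrC subrr.
    case: (i =P 0) => [i0|i0].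
      by move: gx; rewrite i0 => /brA0l ->; rewrite Tr0.
    case: (j =P 0) => [j0|j0].
      by move: gy; rewrite j0 => /brA0r ->; rewrite Tr0.
    by rewrite Tr_big //; lia.
- by rewrite (cm_hom (G1 HGA)) mulr0 Tr01.
Qed.

Lemma chi_ex : exists chi : U -> Endo A,
  [/\ alg_morph chi, (forall x, chi (m x) = cm x) & (forall x, chi (h x) = ch x)].
Proof.
case: Henv => _ /(_ _ cm ch chi_rels) [chi [Hp Hm Hh _]].
by exists chi.
Qed.
Definition chi : U -> Endo A :=
  proj1_sig (constructive_indefinite_description _ chi_ex).
Lemma chiP : [/\ alg_morph chi, (forall x, chi (m x) = cm x) & (forall x, chi (h x) = ch x)].
Proof. exact: (proj2_sig (constructive_indefinite_description _ chi_ex)). Qed.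
Lemma chi_lin : klinear chi. Proof. by case: chiP => -[]. Qed.
Lemma chi_add : addF chi. Proof. exact: klinear_addF chi_lin. Qed.
Lemma chiM x y : chi (x * y) = chi x * chi y. Proof. by case: chiP => -[]. Qed.
Lemma chim x : chi (m x) = cm x. Proof. by case: chiP. Qed.
Lemma chih x : chi (h x) = ch x. Proof. by case: chiP. Qed.

Definition NN (X : Endo A) := exists v w : A, X = Tr 2 v + Tr 3 w.
Lemma NN0 : NN 0.
Proof. by exists 0, 0; rewrite !Tr0 addr0. Qed.
Lemma NND X Y : NN X -> NN Y -> NN (X + Y).
Proof.
move=> [v [w ->]] [v' [w' ->]]; exists (v + v'), (w + w').
by rewrite !(addFD (Tr_addF _)) addrACA.
Qed.
Lemma NNZ (c : k) X : NN X -> NN (c *: X).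
Proof.
move=> [v [w ->]]; exists (c *: v), (c *: w).
by rewrite scalerDr !(klinearZ (Tr_klinear _)).
Qed.
Lemma NNM X Y : NN X -> NN Y -> X * Y = 0.
Proof.
move=> [v [w ->]] [v' [w' ->]].
by rewrite mulrDl !mulrDr !TrM // !Tr_big // !addr0.
Qed.
Lemma NNsum (I : Type) (s : seq I) (F : I -> Endo A) :
  (forall i, NN (F i)) -> NN (\sum_(i <- s) F i).
Proof.
move=> H; elim: s => [|a s IH]; first by rewrite big_nil; apply: NN0.
by rewrite big_cons; apply: NND.
Qed.

Definition P3 (i : int) (v : U) := Pc i v /\ (0 < i -> NN (chi v)).

Lemma P3_dec u : exists l, Dec GU l u /\ (forall p, p \in l -> P3 p.1 p.2).
Proof.
apply: decU_all.
- by split; [apply: Pc1 | rewrite ltxx].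
- move=> i c v [Pv Nv]; split; first exact: PcZ.
  by move=> hi; rewrite (klinearZ chi_lin); apply: NNZ; apply: Nv.
- move=> i j u1 v1 gu gv [Pu Nu] [Pv Nv]; split; first exact: PcM.
  move=> hij.
  case: (ltrP i 0) => hi.
    by rewrite (proj1 Pu hi) mul0r (addF0 chi_add); apply: NN0.
  case: (ltrP j 0) => hj.
    by rewrite (proj1 Pv hj) mulr0 (addF0 chi_add); apply: NN0.
  case: (i =P 0) => [i0|i0].
    have [c ->] := proj2 Pu i0.
    rewrite -scalerAl mul1r (klinearZ chi_lin); apply: NNZ; apply: Nv; lia.
  case: (j =P 0) => [j0|j0].
    have [c ->] := proj2 Pv j0.
    rewrite -scalerAr mulr1 (klinearZ chi_lin); apply: NNZ; apply: Nu; lia.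
  rewrite chiM (NNM (Nu _) (Nv _)); try lia.
  exact: NN0.
- move=> i a ga; have [Pm Ph] := Pcgen ga; split; split => // hi.
    rewrite chim (cm_hom ga).
    case: (i =P 1) => [i1|i1].
      by exists a, 0; rewrite i1 mulr1 Tr0 addr0.
    rewrite Tr_big; last lia.
    exact: NN0.
  rewrite chih (ch_hom ga) /Psich.
  case: (i == 1); last exact: NN0.
  by exists 0, a; rewrite Tr0 add0r.
Qed.

Lemma chi_GU i v : GU i v -> 0 < i -> NN (chi v).
Proof.
move=> gv hi; have [l [Dl Pl]] := P3_dec v.
have := dec_homU i Dl gv; rewrite eqxx => <-.
rewrite -big_filter (addF_sum chi_add) big_seq big_mkcond; apply: NNsum => p.
case: ifP => [|_]; last exact: NN0.
rewrite mem_filter => /andP [/eqP pi pl].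
by case: (Pl p pl) => _; apply; rewrite pi.
Qed.

Lemma chi_mI w : mIl GU w -> NN (chi w).
Proof.
move=> [l [[Dl ->] Pl]]; rewrite (addF_sum chi_add) big_seq big_mkcond; apply: NNsum => p.
case: ifP => [pl|_]; last exact: NN0.
by apply: (chi_GU (Dl p pl)); apply: Pl.
Qed.

Lemma chi_mI2 q : mI2 GU q -> chi q = 0.
Proof.
move=> [l [Pl ->]]; rewrite (addF_sum chi_add) big_seq big1 // => p pl.
have [H1 H2] := Pl p pl.
by rewrite chiM; apply: NNM; apply: chi_mI; apply/(mI_iff GU_graded).
Qed.

Lemma mingen x y : GA 1 x -> GA 1 y -> in_max_ideal_sq GU (m x + h y) -> x = 0 /\ y = 0.
Proof.
move=> gx gy /chi_mI2; rewrite (addFD chi_add) chim chih (cm_hom gx) (ch_hom gy) /Psich eqxx mulr1.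
move=> E.
have E2 := congr1 (fun X : Endo A => X (delta A) 2) E.
have E3 := congr1 (fun X : Endo A => X (delta A) 3) E.
move: E2 E3; rewrite !endo_addE !endo_zeroE !Tr_delta /trc /=.
by rewrite !addr0 !add0r => -> ->.
Qed.
End Chi.
End Conn.
End Grad.
End Main.

Unset Implicit Arguments.

Theorem proposition2p2 (k : fieldType) (A : comAlgType k) (br : A -> A -> A)
    (U : algType k) (m h : A -> U) :
  is_Poisson_bracket br -> affine A -> is_Poisson_enveloping br m h ->
  (* (i) *)
  (forall (GA : int -> A -> Prop) (d : int),
     Zgraded GA -> bracket_homog br GA d ->
     exists GU : int -> U -> Prop, Zgraded GU /\ PEA_degrees m h GA GU d) /\
  (* (ii) *)
  (forall (GA : int -> A -> Prop) (d : int),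
     connected_Ngraded GA -> bracket_homog br GA d -> 0 <= d ->
     exists GU : int -> U -> Prop,
       [/\ Zgraded GU, PEA_degrees m h GA GU d & connected_Ngraded GU]) /\
  (* (iii) *)
  (forall (GA : int -> A -> Prop) (d : int),
     connected_Ngraded GA -> (forall a, in_gen_subalg (GA 1) a) ->
     bracket_homog br GA d -> 0 <= d ->
     exists GU : int -> U -> Prop,
       [/\ Zgraded GU, PEA_degrees m h GA GU d, connected_Ngraded GU &
           minimally_generated_by_m1_h1 m h GA GU]).
Proof.
move=> Hbr _ Henv; split; [|split].
- move=> GA d HGA Hbh.
  exists (GU Hbr Henv HGA Hbh); split; [exact: GU_graded | exact: GU_deg].
- move=> GA d HcA Hbh d0.
  have HGA : Zgraded GA by case: HcA.
  exists (GU Hbr Henv HGA Hbh); split; [exact: GU_graded | exact: GU_deg | exact: GU_conn].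
- move=> GA d HcA Hgen1 Hbh d0.
  have HGA : Zgraded GA by case: HcA.
  exists (GU Hbr Henv HGA Hbh); split; [exact: GU_graded | exact: GU_deg | exact: GU_conn |].
  split; last split.
  + move=> x gx; split; apply/(mI_iff (GU_graded Hbr Henv HGA Hbh)).
      exact: mIU_m1.
    exact: mIU_h1.
  + About surj. exact: surj.
  + About mingen. exact: mingen.
Qed.
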